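(* Let $T$ be an $spo$-tableau, let $x\in B_1$, and let $S_1$ be the box of $x\rightarrow T$ not in the shape of $T$. Let $y\in B_0$ be such that the insertion $(x\rightarrow T)\leftarrow y$ does not cause a cancellation, and let $S_2$ be the box of $(x\rightarrow T)\leftarrow y$ not in the shape of $x\rightarrow T$. Then $S_2$ lies in a column strictly to the right of the column of $S_1$ and in a row weakly above (row index $\le$) the row of $S_1$.
   Context: Fix positive integers $m,n$. Let $B_0=\{1,\bar1,2,\bar2,\dots,m,\bar m\}$, $B_1=\{1^\circ,\dots,n^\circ\}$, $B=B_0\cup B_1$, totally ordered by $1<\bar1<2<\bar2<\cdots<m<\bar m<1^\circ<\cdots<n^\circ$. Rows are numbered from the top starting at 1, columns from the left. An $spo$-tableau of shape $\lambda$ is a filling of the Young diagram of $\lambda$ with entries of $B$ such that (i) the boxes containing entries of $B_0$ form a Young diagram $\sigma\subseteq\lambda$, and this part is weakly increasing along rows, strictly increasing down columns, and every entry in row $i$ is $\ge i$; (ii) the entries of $B_1$ (filling $\lambda/\sigma$) are strictly increasing along rows and weakly increasing down columns. $spo$-insertion: a forward jeu de taquin slide on an empty box with right neighbour $a$ and lower neighbour $b$ moves $a$ left into the empty box if $a<b$ or ($a=b\in B_1$), and moves $b$ up into the empty box if $b<a$ or ($a=b\in B_0$); if only one neighbour exists it moves in; slides are repeated until the empty box has no right or lower neighbour, and then that box is deleted. Inserting $z\in B_0$ into row $r$: if no entry of the row exceeds $z$, append $z$ in a new box at the end of the row; otherwise let $w$ be the least entry of the row with $w>z$; if $z=r$ (unbarred)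 and $w=\bar r$, delete $\bar r$ leaving an empty box (a cancellation); otherwise replace $w$ by $z$, displacing $w$. Inserting $z\in B_1$ into column $c$: if no entry of the column exceeds $z$, append $z$ in a new box at the bottom; otherwise replace the least entry $w>z$ of the column by $z$, displacing $w$. To insert $x\in B_0$ into $T$ (result $T\leftarrow x$) start by inserting $x$ into row 1; to insert $x\in B_1$ (result $x\rightarrow T$) start by inserting $x$ into column 1. Whenever an entry $w$ is displaced from a box in row $r$, column $c$: if $w\in B_0$ insert it into row $r+1$; if $w\in B_1$ insert it into column $c+1$. The process ends when an entry is placed in a new box, or when a cancellation occurs, in which case the empty box is moved to an outer corner by forward slides and deleted. If no cancellation occurs the result has exactly one new box. *)

(* Defs.v *)
From mathcomp Require Import all_boot.
Set Implicit Arguments. Unset Strict Implicit. Unset Printing Implicit Defensive.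

(* L0 i false = i,  L0 i true = \bar i  (elements of B0)
   L1 j       = j°                      (elements of B1) *)
Inductive letter := L0 of nat & bool | L1 of nat.

Definition isB0 (a : letter) : bool := if a is L0 _ _ then true else false.

Definition in_B0 (m : nat) (a : letter) : Prop :=
  if a is L0 i _ then 0 < i <= m else False.
Definition in_B1 (n : nat) (a : letter) : Prop :=
  if a is L1 j then 0 < j <= n else False.
Definition in_B (m n : nat) (a : letter) : Prop := in_B0 m a \/ in_B1 n a.

Definition ltl (a b : letter) : bool :=
  match a, b with
  | L0 i s, L0 j t => (i < j) || ((i == j) && ~~ s && t)
  | L0 _ _, L1 _ => true
  | L1 _, L0 _ _ => false
  | L1 i, L1 j => i < j
  end.
Definition lel (a b : letter) : bool := ~~ ltl b a.
Definition eql (a b : letter) : bool := ~~ ltl a b && ~~ ltl b a.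

(* A filling is the list of its rows, top row first; rows and columns are
   indexed from 0 internally (row r here is row r+1 of the paper). *)
Definition tableau := seq (seq letter).

Definition get (T : tableau) (r c : nat) : option letter := onth (nth [::] T r) c.

Definition spo_tableau (m n : nat) (T : tableau) : Prop :=
  (forall r c a, get T r c = Some a -> in_B m n a) /\
  (* the filled boxes form the Young diagram of a partition lambda
     (no empty rows, closed under moving up/left) *)
  all (fun row => 0 < size row) T /\
  (forall r c a, get T r c = Some a ->
     forall r' c', r' <= r -> c' <= c -> exists b, get T r' c' = Some b) /\
  (forall r c a, get T r c = Some a -> isB0 a ->
     forall r' c', r' <= r -> c' <= c -> exists2 b, get T r' c' = Some b & isB0 b) /\
  (forall r c a b, get T r c = Some a -> get T r c.+1 = Some b ->
     isB0 a -> isB0 b -> lel a b) /\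
  (forall r c a b, get T r c = Some a -> get T r.+1 c = Some b ->
     isB0 a -> isB0 b -> ltl a b) /\
  (* (i) every B0 entry in (paper) row r+1 is >= r+1 *)
  (forall r c a, get T r c = Some a -> isB0 a -> lel (L0 r.+1 false) a) /\
  (forall r c a b, get T r c = Some a -> get T r c.+1 = Some b ->
     ~~ isB0 a -> ~~ isB0 b -> ltl a b) /\
  (forall r c a b, get T r c = Some a -> get T r.+1 c = Some b ->
     ~~ isB0 a -> ~~ isB0 b -> lel a b).

Definition set_box (T : tableau) (r c : nat) (z : letter) : tableau :=
  set_nth [::] T r (set_nth z (nth [::] T r) c z).

Definition delete_box (T : tableau) (r c : nat) : tableau :=
  [seq row <- set_nth [::] T r (take c (nth [::] T r)) | 0 < size row].

(* position (index) of the least entry w > z in a line (row or column,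
   given as the list of its boxes, None = no box); the leftmost/topmost
   one if the least value occurs several times *)
Definition least_pos (z : letter) (os : seq (option letter)) : nat :=
  find (fun o => if o is Some a then
                   ltl z a && all (fun o' => if o' is Some b then ltl z b ==> lel a b
                                             else true) os
                 else false) os.

Definition has_greater (z : letter) (os : seq (option letter)) : bool :=
  has (fun o => if o is Some a then ltl z a else false) os.

Definition row_line (T : tableau) (r : nat) : seq (option letter) :=
  map Some (nth [::] T r).
Definition col_line (T : tableau) (c : nat) : seq (option letter) :=
  map (fun r => get T r c) (iota 0 (size T)).
Definition col_bottom (T : tableau) (c : nat) : nat :=
  find (fun o => if o is None then true else false)
       (map (fun r => get T r c) (iota 0 (size T).+1)).

(* cancellation test when z is inserted into (paper) row r+1 and the least
   entry greater than z is w:  z = r+1 (unbarred) and w = \bar{r+1} *)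
Definition is_cancel (r : nat) (z w : letter) : bool :=
  match z, w with
  | L0 i false, L0 j true => (i == r.+1) && (j == r.+1)
  | _, _ => false
  end.

Inductive target := Row of nat | Col of nat.

(* Placed T' r c : process ended with a new box (r,c);
   Cancelled T' r c : a cancellation left an empty box at (r,c)
   (the filling T' still stores the old entry there, it is never read) *)
Inductive outcome := Placed of tableau & nat & nat | Cancelled of tableau & nat & nat.

Definition dest (c r : nat) (w : letter) : target :=
  if isB0 w then Row r.+1 else Col c.+1.

Inductive ins : tableau -> letter -> target -> outcome -> Prop :=
| ins_row_new T z r :
    ~~ has_greater z (row_line T r) ->
    ins T z (Row r) (Placed (set_box T r (size (nth [::] T r)) z) r (size (nth [::] T r)))
| ins_row_cancel T z r :
    has_greater z (row_line T r) ->
    is_cancel r z (nth z (nth [::] T r) (least_pos z (row_line T r))) ->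
    ins T z (Row r) (Cancelled T r (least_pos z (row_line T r)))
| ins_row_bump T z r o :
    has_greater z (row_line T r) ->
    let c := least_pos z (row_line T r) in
    let w := nth z (nth [::] T r) c in
    ~~ is_cancel r z w ->
    ins (set_box T r c z) w (dest c r w) o ->
    ins T z (Row r) o
| ins_col_new T z c :
    ~~ has_greater z (col_line T c) ->
    ins T z (Col c) (Placed (set_box T (col_bottom T c) c z) (col_bottom T c) c)
| ins_col_bump T z c o :
    has_greater z (col_line T c) ->
    let r := least_pos z (col_line T c) in
    let w := nth z (nth [::] T r) c in
    ins (set_box T r c z) w (dest c r w) o ->
    ins T z (Col c) o.

Definition move_left (T : tableau) (r c : nat) : bool :=
  match get T r c.+1, get T r.+1 c with
  | Some a, Some b => ltl a b || (eql a b && ~~ isB0 a)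
  | Some _, None => true
  | _, _ => false
  end.
Definition move_up (T : tableau) (r c : nat) : bool :=
  match get T r c.+1, get T r.+1 c with
  | Some a, Some b => ltl b a || (eql a b && isB0 a)
  | None, Some _ => true
  | _, _ => false
  end.

Inductive slides : tableau -> nat -> nat -> tableau -> Prop :=
| slides_done T r c :
    get T r c.+1 = None -> get T r.+1 c = None -> slides T r c (delete_box T r c)
| slides_left T r c a T' :
    get T r c.+1 = Some a -> move_left T r c ->
    slides (set_box T r c a) r c.+1 T' -> slides T r c T'
| slides_up T r c b T' :
    get T r.+1 c = Some b -> move_up T r c ->
    slides (set_box T r c b) r.+1 c T' -> slides T r c T'.

Inductive ins_result :=
| NewBox of tableau & nat & nat   (* result, and its new box (row, column) *)
| Cancel of tableau.

Inductive insert_from (t : target) (T : tableau) (z : letter) : ins_result -> Prop :=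
| insert_new T' r c : ins T z t (Placed T' r c) -> insert_from t T z (NewBox T' r c)
| insert_cancel Th r c T' :
    ins T z t (Cancelled Th r c) -> slides Th r c T' -> insert_from t T z (Cancel T').

Definition row_insert (T : tableau) (x : letter) (res : ins_result) : Prop :=
  insert_from (Row 0) T x res.
Definition col_insert (x : letter) (T : tableau) (res : ins_result) : Prop :=
  insert_from (Col 0) T x res.

(* Main.v *)
Require Import Defs.
From mathcomp Require Import all_boot.
Set Implicit Arguments. Unset Strict Implicit. Unset Printing Implicit Defensive.

Lemma ltl_irr a : ltl a a = false.
Proof. case: a => [i s|i] /=; rewrite ?ltnn //=; by case: s; rewrite ?andbF ?andbT. Qed.

Lemma ltl_trans a b c : ltl a b -> ltl b c -> ltl a c.
Proof.
case: a => [i s|i]; case: b => [j t|j]; case: c => [k u|k] //=.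
- case/orP=> [ij|/andP[/andP[/eqP <- ns] ->]].
  + case/orP=> [jk|/andP[/andP[/eqP <- _] _]]; first by rewrite (ltn_trans ij jk).
    by rewrite ij.
  + case/orP=> [->//|/andP[/andP[_]]]; by [].
- exact: ltn_trans.
Qed.

Lemma ltl_total a b : ltl a b = false -> ltl b a = false -> a = b.
Proof.
case: a => [i s|i]; case: b => [j t|j] //=.
- move=> /norP[ij h1] /norP[ji h2].
  have eij : i = j by apply/anti_leq; rewrite (leqNgt i j) (leqNgt j i) ij ji.
  subst j; move: h1 h2; rewrite eqxx /=; by case: s; case: t.
- by move=> /negbT; rewrite -leqNgt => h1 /negbT; rewrite -leqNgt => h2; rewrite (@anti_leq i j) // h1 h2.
Qed.

Lemma lel_trans a b c : lel a b -> lel b c -> lel a c.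
Proof.
rewrite /lel => ba cb; apply/negP=> ca.
case e1: (ltl c b).
  by rewrite e1 in cb.
case e2: (ltl b c).
  by move: (ltl_trans e2 ca); rewrite (negbTE ba).
by move: ca; rewrite (ltl_total e1 e2) => ca; rewrite ca in ba.
Qed.

Lemma lel_ltl_trans a b c : lel a b -> ltl b c -> ltl a c.
Proof.
rewrite /lel => ba bc; case e: (ltl a b); first exact: ltl_trans e bc.
by rewrite (ltl_total e (negbTE ba)).
Qed.

Lemma ltl_lel_trans a b c : ltl a b -> lel b c -> ltl a c.
Proof.
rewrite /lel => ab cb; case e: (ltl b c); first exact: ltl_trans ab e.
by rewrite -(ltl_total e (negbTE cb)).
Qed.

Lemma ltlW a b : ltl a b -> lel a b.
Proof. rewrite /lel => ab; apply/negP => ba; by move: (ltl_trans ab ba); rewrite ltl_irr. Qed.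

Lemma lel_refl a : lel a a.
Proof. by rewrite /lel ltl_irr. Qed.

Lemma ltl_B01 a b : isB0 a -> ~~ isB0 b -> ltl a b.
Proof. by case: a => //; case: b. Qed.

Lemma ltl_B1 a b : ~~ isB0 a -> ltl a b -> ~~ isB0 b.
Proof. by case: a => //; case: b. Qed.

Lemma lel_B0 a b : isB0 b -> lel a b -> isB0 a.
Proof. by case: a => //; case: b. Qed.

Lemma get_size U r c a : get U r c = Some a -> c < size (nth [::] U r).
Proof. rewrite /get => h; by rewrite -onthTE h. Qed.

Lemma get_None U r c : size (nth [::] U r) <= c -> get U r c = None.
Proof. by move=> h; rewrite /get onth_default. Qed.

Lemma get_nth U r c a d : get U r c = Some a -> nth d (nth [::] U r) c = a.
Proof. exact: onth_nth. Qed.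

Lemma get_Some U r c d : c < size (nth [::] U r) -> get U r c = Some (nth d (nth [::] U r) c).
Proof. move=> h; rewrite /get onthE (nth_map d) //. Qed.

Lemma get_out U r c : size U <= r -> get U r c = None.
Proof. by move=> h; rewrite /get nth_default // onth0n. Qed.

Lemma onth_sn (s : seq letter) c z c' : c' != c -> (c <= size s) || (c < c') ->
  onth (set_nth z s c z) c' = onth s c'.
Proof.
move=> ne hc; case: (ltnP c' (size s)) => hs.
  have hs' : c' < size (set_nth z s c z) by rewrite size_set_nth leq_max hs orbT.
  rewrite !onthE (nth_map z) // (nth_map z) // nth_set_nth /= (negbTE ne) //.
rewrite (onth_default hs) onth_default // size_set_nth geq_max hs andbT.
case/orP: hc => hc //.
by rewrite ltn_neqAle eq_sym ne (leq_trans hc hs).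
Qed.

Lemma get_sb_same U r c z : get (set_box U r c z) r c = Some z.
Proof.
rewrite /get /set_box nth_set_nth /= eqxx onthE (nth_map z) ?nth_set_nth /= ?eqxx //.
by rewrite size_set_nth leq_max ltnSn.
Qed.

Lemma get_sb_row U r c z r' c' : r' != r -> get (set_box U r c z) r' c' = get U r' c'.
Proof.
move=> ne; rewrite /get /set_box nth_set_nth /= (negbTE ne) //.
Qed.

Lemma get_sb_col U r c z c' : c' != c -> (c <= size (nth [::] U r)) || (c < c') ->
  get (set_box U r c z) r c' = get U r c'.
Proof.
move=> ne h; rewrite /get /set_box nth_set_nth /= eqxx onth_sn //.
Qed.

Lemma get_sb U r c z r' c' : (r' != r) || (c' != c) -> (c <= size (nth [::] U r)) || (c < c') ->
  get (set_box U r c z) r' c' = get U r' c'.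
Proof.
case: (eqVneq r' r) => [->|ne] /= h1 h2; last exact: get_sb_row.
exact: get_sb_col.
Qed.

Lemma col_lineE U c r : nth None (col_line U c) r = get U r c.
Proof.
rewrite /col_line; case: (ltnP r (size U)) => h.
  by rewrite (nth_map 0) ?size_iota // nth_iota.
by rewrite nth_default ?size_map ?size_iota // get_out.
Qed.

Lemma row_lineE U r c : nth None (row_line U r) c = get U r c.
Proof. by rewrite /row_line /get onthE. Qed.

Lemma has_greaterP z os :
  reflect (exists j e, nth None os j = Some e /\ ltl z e) (has_greater z os).
Proof.
rewrite /has_greater; apply: (iffP (has_nthP None)).
  case=> j _; case e: (nth None os j) => [a|] // h; by exists j, a.
case=> j [e [h1 h2]]; exists j; last by rewrite h1.
by case: (ltnP j (size os)) => // h; rewrite nth_default in h1.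
Qed.

Lemma exists_min z os : has_greater z os ->
  exists k w, nth None os k = Some w /\ ltl z w /\
    forall j e, nth None os j = Some e -> ltl z e -> lel w e.
Proof.
elim: os => [//|o os IH] /=.
have Htl : has_greater z os -> exists k w, nth None (o :: os) k = Some w /\ ltl z w /\
    forall j e, nth None (o :: os) j = Some e -> ltl z e -> lel w e.
  move/IH => [k [w [h1 [h2 h3]]]].
  case: o => [a|].
    case ea: (ltl z a).
      case la: (ltl a w).
        exists 0, a; split => //; split => //; case=> [|j] e /= he hz.
          by case: he => <-; apply: lel_refl.
        exact: lel_trans (ltlW la) (h3 _ _ he hz).
      exists k.+1, w; split => //; split => //; case=> [|j] e /= he hz.
        by case: he => <-; rewrite /lel la.
      exact: h3 he hz.
    exists k.+1, w; split => //; split => //; case=> [|j] e /= he hz.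
      by case: he => ee; rewrite -ee ea in hz.
    exact: h3 he hz.
  exists k.+1, w; split => //; split => //; case=> [|j] e /= he hz //.
  exact: h3 he hz.
case: o Htl => [a|] Htl; last by move=> /Htl.
case/orP=> [ha|/Htl//].
case hh: (has_greater z os); first exact: Htl.
exists 0, a; split => //; split => //; case=> [|j] e /= he hz.
  by case: he => <-; apply: lel_refl.
move/negbT: hh => /has_greaterP hh; exfalso; apply: hh; by exists j, e.
Qed.

Lemma lp_spec z os : has_greater z os ->
  exists w, nth None os (least_pos z os) = Some w /\ ltl z w /\
    (forall j e, nth None os j = Some e -> ltl z e -> lel w e) /\
    (forall j e, j < least_pos z os -> nth None os j = Some e -> ltl z e -> ltl w e).
Proof.
move=> hg.
set p := (fun o : option letter => if o is Some a then
                   ltl z a && all (fun o' => if o' is Some b then ltl z b ==> lel a b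
                                             else true) os
                 else false).
have allP : forall a, (forall j e, nth None os j = Some e -> ltl z e -> lel a e) ->
   all (fun o' => if o' is Some b then ltl z b ==> lel a b else true) os.
  move=> a h; apply/(all_nthP None) => j _; case e: (nth None os j) => [b|] //.
  by apply/implyP => zb; apply: h e zb.
have allE : forall a, all (fun o' => if o' is Some b then ltl z b ==> lel a b else true) os ->
   (forall j e, nth None os j = Some e -> ltl z e -> lel a e).
  move=> a /(all_nthP None) h j e he ze.
  have hj : j < size os by case: (ltnP j (size os)) => // hj; rewrite nth_default in he.
  by move: (h j hj); rewrite he ze.
have hp : has p os.
  have [k [w [h1 [h2 h3]]]] := exists_min hg.
  apply/(has_nthP None); exists k.
    by case: (ltnP k (size os)) => // hk; rewrite nth_default in h1.
  by rewrite /p h1 h2 /= allP.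
have := nth_find None hp; rewrite -/(least_pos z os).
case e: (nth None os (least_pos z os)) => [w|] //= /andP[zw aw].
exists w; split => //; split => //; split; first exact: allE.
move=> j e' jl he' ze'.
have := before_find None jl; rewrite -/(least_pos z os) /p he' ze' /=.
case lt: (ltl w e') => // /negP; case; apply: allP => j2 e2 h2 z2.
have we : lel e' w by rewrite /lel lt.
exact: lel_trans we (allE _ aw _ _ h2 z2).
Qed.

Lemma lp_le z os i b : nth None os i = Some b -> ltl z b ->
  (forall j e, i < j -> nth None os j = Some e -> ltl z e -> lel b e) ->
  least_pos z os <= i.
Proof.
move=> hb zb h.
have hg : has_greater z os by apply/has_greaterP; exists i, b.
have [w [h1 [h2 [h3 h4]]]] := lp_spec hg.
rewrite leqNgt; apply/negP => il.
have := h4 _ _ il hb zb; have := h _ _ il h1 h2; rewrite /lel => /negbTE ->; by [].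
Qed.

Lemma lp_le_none z os i : has_greater z os ->
  (forall j, i <= j -> nth None os j = None) -> least_pos z os < i.
Proof.
move=> hg h; have [w [h1 _]] := lp_spec hg.
rewrite ltnNge; apply/negP => /h; by rewrite h1.
Qed.

Lemma cb_spec U c : get U (col_bottom U c) c = None /\
  (forall r, r < col_bottom U c -> get U r c <> None).
Proof.
rewrite /col_bottom.
set p := (fun o : option letter => if o is None then true else false).
set s := map (fun r => get U r c) (iota 0 (size U).+1).
have ns : forall r, r < size s -> nth None s r = get U r c.
  move=> r; rewrite size_map size_iota => h; by rewrite (nth_map 0) ?size_iota // nth_iota.
have hp : has p s.
  apply/(has_nthP None); exists (size U); first by rewrite size_map size_iota.
  by rewrite ns ?size_map ?size_iota // get_out.
split.
  have := nth_find None hp; rewrite ns -?has_find //.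
  by case: (get U _ c).
move=> r rl; have := before_find None rl.
rewrite ns; first by case: (get U r c).
exact: leq_trans rl (find_size _ _).
Qed.

Lemma cb_le U c R : get U R c = None -> col_bottom U c <= R.
Proof.
move=> h; rewrite leqNgt; apply/negP => /(proj2 (cb_spec U c)); by [].
Qed.

Lemma get_sb_gt U r c z r' k : c < k -> get (set_box U r c z) r' k = get U r' k.
Proof. move=> ck; apply: get_sb; by rewrite ?ck ?orbT // (gtn_eqF ck) orbT. Qed.

Lemma get_sb_lt U r c z r' k : k < c -> c <= size (nth [::] U r) ->
  get (set_box U r c z) r' k = get U r' k.
Proof. move=> kc cs; apply: get_sb; by rewrite ?cs // (ltn_eqF kc) orbT. Qed.

Lemma get_sb_ex U r c z r' k a : get U r c = Some a -> (r' != r) || (k != c) ->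
  get (set_box U r c z) r' k = get U r' k.
Proof. move=> h ne; apply: get_sb => //; by rewrite ltnW // (get_size h). Qed.

Definition J (U : tableau) (c : nat) : Prop :=
  (forall r c' a, c <= c' -> get U r c' = Some a -> forall r', r' <= r -> exists b, get U r' c' = Some b) /\
  (forall r c' a, get U r c' = Some a -> isB0 a -> forall r' c'', r' <= r -> c'' <= c' -> c <= c'' ->
      exists2 b, get U r' c'' = Some b & isB0 b) /\
  (forall r c' a b, c <= c' -> get U r c' = Some a -> get U r c'.+1 = Some b ->
      ~~ isB0 a -> ~~ isB0 b -> ltl a b) /\
  (forall r r' c' a b, c <= c' -> r < r' -> get U r c' = Some a -> get U r' c' = Some b ->
      ~~ isB0 a -> ~~ isB0 b -> lel a b).

Definition agree (U V : tableau) (c : nat) : Prop :=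
  forall r c', c <= c' -> get U r c' = get V r c' \/
     exists a b, get V r c' = Some a /\ isB0 a /\ get U r c' = Some b /\ isB0 b.

Lemma J_mono U c c' : J U c -> c <= c' -> J U c'.
Proof.
move=> [h1 [h2 [h3 h4]]] cc; split; [|split; [|split]].
- move=> r k a ck; apply: h1; exact: leq_trans cc ck.
- move=> r k a ha hb r' k' rr kk ck; apply: h2 ha hb _ _ rr kk _; exact: leq_trans cc ck.
- move=> r k a b ck; apply: h3; exact: leq_trans cc ck.
- move=> r r' k a b ck; apply: h4; exact: leq_trans cc ck.
Qed.

Lemma agree_B1 U V c r c' a : agree U V c -> c <= c' -> get U r c' = Some a -> ~~ isB0 a ->
  get V r c' = Some a.
Proof.
move=> ag cc h nb; case: (ag r c' cc) => [<-//|[a0 [b0 [_ [_ [h' hb]]]]]].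
by move: h'; rewrite h => -[ea]; rewrite ea hb in nb.
Qed.

Lemma agree_B0 U V c r c' a : agree U V c -> c <= c' -> get U r c' = Some a -> isB0 a ->
  exists2 b, get V r c' = Some b & isB0 b.
Proof.
move=> ag cc h nb; case: (ag r c' cc) => [e|[a0 [b0 [h1 [h2 _]]]]]; last by exists a0.
by exists a; rewrite -?e.
Qed.

Lemma agree_Some U V c r c' a : agree U V c -> c <= c' -> get U r c' = Some a ->
  exists b, get V r c' = Some b.
Proof.
move=> ag cc h; case: (ag r c' cc) => [e|[a0 [b0 [h1 _]]]]; last by exists a0.
by exists a; rewrite -e.
Qed.

Lemma agree_SomeV U V c r c' a : agree U V c -> c <= c' -> get V r c' = Some a ->
  exists b, get U r c' = Some b.
Proof.
move=> ag cc h; case: (ag r c' cc) => [e|[a0 [b0 [_ [_ [h1 _]]]]]]; last by exists b0.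
by exists a; rewrite e.
Qed.

Lemma agree_B0V U V c r c' a : agree U V c -> c <= c' -> get V r c' = Some a -> isB0 a ->
  exists2 b, get U r c' = Some b & isB0 b.
Proof.
move=> ag cc h nb; case: (ag r c' cc) => [e|[a0 [b0 [_ [_ [h1 h2]]]]]]; last by exists b0.
by exists a; rewrite ?e.
Qed.

Lemma J_agree U V c : agree U V c -> J V c -> J U c.
Proof.
move=> ag [h1 [h2 [h3 h4]]]; split; [|split; [|split]].
- move=> r k a ck ha r' rr.
  have [b hb] := agree_Some ag ck ha.
  have [b' hb'] := h1 _ _ _ ck hb _ rr.
  exact: agree_SomeV ag ck hb'.
- move=> r k a ha hb r' k' rr kk ck.
  have ck' := leq_trans ck kk.
  have [b hb1 hb2] := agree_B0 ag ck' ha hb.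
  have [b' hb1' hb2'] := h2 _ _ _ hb1 hb2 _ _ rr kk ck.
  exact: agree_B0V ag ck hb1' hb2'.
- move=> r k a b ck ha hb na nb.
  have ck1 : c <= k.+1 by exact: leq_trans ck (leqnSn _).
  exact: h3 ck (agree_B1 ag ck ha na) (agree_B1 ag ck1 hb nb) na nb.
- move=> r r' k a b ck rr ha hb na nb.
  exact: h4 ck rr (agree_B1 ag ck ha na) (agree_B1 ag ck hb nb) na nb.
Qed.

Lemma agree_refl U c : agree U U c.
Proof. by move=> r k _; left. Qed.

Lemma agree_sb U V c r k z : agree U V c -> k < c ->
  (k <= size (nth [::] U r)) -> agree (set_box U r k z) V c.
Proof.
move=> ag kc ks r' c' cc; rewrite get_sb; first exact: ag.
  by rewrite orbC (gtn_eqF (leq_trans kc cc)).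
by rewrite ks.
Qed.

Lemma J_spo m n T : spo_tableau m n T -> J T 0.
Proof.
case=> [_ [_ [hY [hB0 [hR0 [hC0 [_ [hR1 hC1]]]]]]]].
split; [|split; [|split]].
- move=> r c a _ ha r' rr; have [b hb] := hY _ _ _ ha r' c rr (leqnn _); by exists b.
- move=> r c a ha hb r' c' rr cc _; exact: hB0 _ _ _ ha hb _ _ rr cc.
- move=> r c a b _; exact: hR1.
- move=> r r' c a b _ rr; elim: r' rr b => [//|r' IH] rr b ha hb na nb.
  move: rr; rewrite ltnS leq_eqVlt => /orP[/eqP e|lt].
    by subst r'; exact: hC1 ha hb na nb.
  have [d hd] := hY _ _ _ hb r' c (leqnSn _) (leqnn _).
  case bd: (isB0 d).
    have [e he1 he2] := hB0 _ _ _ hd bd r c (ltnW lt) (leqnn _).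
    by move: he1; rewrite ha => -[ee]; rewrite ee he2 in na.
  have := IH lt _ ha hd na (negbT bd).
  move=> h; apply: lel_trans h _; exact: hC1 hd hb (negbT bd) nb.
Qed.

Definition TS (U : tableau) c v R :=
  get U R c = None \/ exists b, get U R c = Some b /\ ltl v b.

Lemma TS_le U c v R : J U c -> ~~ isB0 v -> has_greater v (col_line U c) -> TS U c v R ->
  least_pos v (col_line U c) <= R.
Proof.
move=> [hY [hB0 [hR hC]]] nv hg [hN|[b [hb vb]]].
  apply: ltnW; apply: lp_le_none => // j Rj; rewrite col_lineE.
  case e: (get U j c) => [d|] //.
  have [b' hb'] := hY _ _ _ (leqnn _) e _ Rj; by rewrite hb' in hN.
apply: (lp_le (b := b)); rewrite ?col_lineE // => j e Rj he ve.
rewrite col_lineE in he; have nb := ltl_B1 nv vb; have ne := ltl_B1 nv ve.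
exact: hC _ _ _ _ _ (leqnn _) Rj hb he nb ne.
Qed.

Lemma cb_TS U c v R : TS U c v R -> ~~ has_greater v (col_line U c) -> col_bottom U c <= R.
Proof.
move=> [hN|[b [hb vb]]] ng; first exact: cb_le.
by case/negP: ng; apply/has_greaterP; exists R, b; rewrite col_lineE.
Qed.

Record ph1 (U U' : tableau) c v r' c' (P : nat -> nat) (a : nat -> letter) : Prop := Ph1 {
  p_le : c <= c';
  p_Pend : P c' = r';
  p_a0 : a c = v;
  p_H1 : forall k, c <= k <= c' -> get U' (P k) k = Some (a k) /\ ~~ isB0 (a k);
  p_H2 : forall r k, c <= k -> (c' < k) || (r != P k) -> get U' r k = get U r k;
  p_H2' : forall r k, k < c -> get U' r k = get U r k;
  p_H3 : forall k, c <= k < c' -> [/\ get U (P k) k = Some (a k.+1), ltl (a k) (a k.+1) & P k.+1 <= P k];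
  p_H4 : forall k r e, c <= k <= c' -> r < P k -> get U r k = Some e -> lel e (a k);
  p_H5 : forall k r e, c <= k <= c' -> P k < r -> get U r k = Some e -> ltl (a k) e;
  p_H6 : get U r' c' = None;
  p_H6' : forall r, r < r' -> get U r c' <> None;
  p_TS : forall R, TS U c v R -> P c <= R }.

Definition Pre U c v := exists R0, TS U c v R0 /\ (0 < c -> forall r, r <= R0 -> get U r c.-1 <> None).

Lemma ph1_ins U v t o : ins U v t o -> forall c U' r' c', t = Col c -> o = Placed U' r' c' ->
  J U c -> ~~ isB0 v -> Pre U c v -> exists P a, ph1 U U' c v r' c' P a.
Proof.
elim=> {U v t o}.
- by [].
- by [].
- by [].
- move=> U v c0 ng c U' r' c' [<-] [<- <- <-] JU nv [R0 [TR0 hR0]].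
  set rb := col_bottom U c0.
  have rbR : rb <= R0 := cb_TS TR0 ng.
  have cs : c0 <= size (nth [::] U rb).
    case: c0 {ng TR0 JU} hR0 rb rbR => [//|c0] hR0 rb rbR.
    case e: (get U rb c0) (hR0 isT rb rbR) => [d|] // _; exact: get_size e.
  have [hN hS] := cb_spec U c0.
  have ngE : forall r e, get U r c0 = Some e -> lel e v.
    move=> r e he; rewrite /lel; apply/negP => ve; case/negP: ng.
    by apply/has_greaterP; exists r, e; rewrite col_lineE.
  exists (fun _ => rb), (fun _ => v); constructor => //.
  + move=> k /andP[h1 h2]; have -> : k = c0 by apply/anti_leq; rewrite h1 h2.
    by rewrite get_sb_same.
  + move=> r k ck h; apply: get_sb; last by rewrite cs.
    by case/orP: h => [ck'|->]; rewrite ?(gtn_eqF ck') ?orbT.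
  + move=> r k kc; exact: get_sb_lt.
  + by move=> k /andP[h1 h2]; move: (leq_ltn_trans h1 h2); rewrite ltnn.
  + move=> k r e /andP[h1 h2] _; have -> : k = c0 by apply/anti_leq; rewrite h1 h2.
    exact: ngE.
  + move=> k r e /andP[h1 h2] rr he; have ek : k = c0 by apply/anti_leq; rewrite h1 h2.
    subst k; case: JU => hY _; have [b hb] := hY _ _ _ (leqnn _) he rb (ltnW rr).
    by rewrite hb in hN.
  + move=> R TR; exact: cb_TS TR ng.
- move=> U v c0 o hg u w IHh IH c U' r' c' [<-] eo JU nv PreU.
  have [w0 [hw0 [vw0 [wmin wstr]]]] := lp_spec hg; rewrite -/u col_lineE in hw0.
  have ew : w = w0 := get_nth _ hw0.
  rewrite ew in IHh IH.
  have nw := ltl_B1 nv vw0.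
  have dE : dest c0 u w0 = Col c0.+1 by rewrite /dest (negbTE nw).
  rewrite dE in IHh IH.
  have cs : c0 < size (nth [::] U u) := get_size hw0.
  set U1 := set_box U u c0 v in IHh IH.
  have gt : forall r k, c0 < k -> get U1 r k = get U r k by move=> r k; exact: get_sb_gt.
  have JU1 : J U1 c0.+1.
    apply: J_agree (J_mono JU (leqnSn _)) => r k ck; left; exact: gt.
  case: (JU) => [hY [hB0 [hR hC]]].
  have TS1 : TS U1 c0.+1 w0 u.
    rewrite /TS gt //; case e: (get U u c0.+1) => [b|]; last by left.
    right; exists b; split => //.
    case bb: (isB0 b).
      have [b' hb1 hb2] := hB0 _ _ _ e bb u c0 (leqnn _) (leqnSn _) (leqnn _).
      by rewrite hw0 in hb1; case: hb1 => eb; rewrite -eb in hb2; by rewrite hb2 in nw.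
    exact: hR _ _ _ _ (leqnn _) hw0 e nw (negbT bb).
  have Pre1 : Pre U1 c0.+1 w0.
    exists u; split => // _ r ru /=.
    case: (eqVneq r u) => [->|ne]; first by rewrite get_sb_same.
    rewrite get_sb_row //; have [b hb] := hY _ _ _ (leqnn _) hw0 _ ru; by rewrite hb.
  have [P' [a' ph]] := IH _ _ _ _ erefl eo JU1 nw Pre1.
  case: ph => le' Pe' a0' H1' H2' H2'' H3' H4' H5' H6' H6'' TS'.
  have cc' : c0 < c' := le'.
  exists (fun k => if k == c0 then u else P' k), (fun k => if k == c0 then v else a' k).
  constructor => //.
  + exact: ltnW.
  + by rewrite (gtn_eqF cc').
  + by rewrite eqxx.
  + move=> k /andP[h1 h2]; case: (eqVneq k c0) => [->|ne].
      by rewrite H2'' ?get_sb_same.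
    apply: H1'; by rewrite h2 andbT ltn_neqAle eq_sym ne h1.
  + move=> r k ck h; case: (eqVneq k c0) => [ek|ne].
      subst k; move: h; rewrite /= eqxx ltnNge (ltnW cc') /= => h.
      by rewrite H2'' // get_sb_row.
    have ck' : c0 < k by rewrite ltn_neqAle eq_sym ne ck.
    move: h; rewrite /= (negbTE ne) => h.
    by rewrite (H2' r k ck' h) gt.
  + move=> r k kc; rewrite H2'' ?(leq_trans kc) // get_sb_lt //; exact: ltnW.
  + move=> k /andP[h1 h2]; case: (eqVneq k c0) => [ek|ne].
      subst k; rewrite (gtn_eqF (ltnSn _)) a0' hw0; split => //.
      exact: TS'.
    have ck' : c0 < k by rewrite ltn_neqAle eq_sym ne h1.
    rewrite (gtn_eqF (leq_trans ck' (leqnSn _))).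
    have [e1 e2 e3] := H3' k (introT andP (conj ck' h2)).
    by rewrite -gt.
  + move=> k r e /andP[h1 h2]; case: (eqVneq k c0) => [ek|ne].
      subst k => ru he; rewrite /lel; apply/negP => ve.
      have := wstr _ _ ru (etrans (col_lineE _ _ _) he) ve.
      have ne := ltl_B1 nv ve.
      by rewrite /lel in hC; move: (hC _ _ _ _ _ (leqnn _) ru he hw0 ne nw) => /negbTE ->.
    have ck' : c0 < k by rewrite ltn_neqAle eq_sym ne h1.
    move=> rr he; apply: H4' rr _; first by rewrite ck'.
    by rewrite gt.
  + move=> k r e /andP[h1 h2]; case: (eqVneq k c0) => [ek|ne].
      subst k => ur he; case eb: (isB0 e).
        have [b hb1 hb2] := hB0 _ _ _ he eb u c0 (ltnW ur) (leqnn _) (leqnn _).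
        by rewrite hw0 in hb1; case: hb1 => eb'; rewrite -eb' in hb2; by rewrite hb2 in nw.
      exact: ltl_lel_trans vw0 (hC _ _ _ _ _ (leqnn _) ur hw0 he nw (negbT eb)).
    have ck' : c0 < k by rewrite ltn_neqAle eq_sym ne h1.
    move=> rr he; apply: H5' rr _; first by rewrite ck'.
    by rewrite gt.
  + by rewrite -gt.
  + move=> r rr; rewrite -gt //; exact: H6''.
  + move=> R TR; rewrite eqxx; exact: TS_le.
Qed.

Definition ctx T T1 x r1 c1 P a : Prop :=
  [/\ J T 0,
   (forall r c a b, get T r c = Some a -> get T r c.+1 = Some b -> isB0 a -> isB0 b -> lel a b),
   (forall r c a b, get T r c = Some a -> get T r.+1 c = Some b -> isB0 a -> isB0 b -> ltl a b)
   & ph1 T T1 0 x r1 c1 P a].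


Lemma get_None_after U r c k : get U r c = None -> c <= k -> get U r k = None.
Proof.
move=> h ck; apply: get_None; case: (ltnP c (size (nth [::] U r))) => cs.
  by rewrite (get_Some (L1 0) cs) in h.
exact: leq_trans cs ck.
Qed.

Lemma not_path (c1 r k : nat) (P : nat -> nat) : ~~ ((k <= c1) && (r == P k)) -> (c1 < k) || (r != P k).
Proof. by rewrite negb_and -ltnNge. Qed.

Lemma T1_B0 T T1 x r1 c1 P a r k e : ctx T T1 x r1 c1 P a ->
  get T1 r k = Some e -> isB0 e -> get T r k = Some e.
Proof.
case=> _ _ _ ph he be.
case pb: ((k <= c1) && (r == P k)).
  case/andP: pb => kc /eqP er; subst r.
  have [h1 h2] := p_H1 ph (introT andP (conj (leq0n k) kc)).
  by rewrite h1 in he; case: he => ee; rewrite -ee (negbTE h2) in be.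
by rewrite -(p_H2 ph (leq0n k) (not_path (negbT pb))).
Qed.

Lemma pathT T T1 x r1 c1 P a k : ctx T T1 x r1 c1 P a -> k <= c1 ->
  get T (P k) k = None \/ exists b, get T (P k) k = Some b /\ ~~ isB0 b.
Proof.
case=> _ _ _ ph kc; case: (ltngtP k c1) kc => // [kc|->] _.
  have [h1 _ _] := p_H3 ph (introT andP (conj (leq0n k) kc)).
  right; exists (a k.+1); split => //.
  by case: (p_H1 ph (introT andP (conj (leq0n k.+1) kc))).
by left; rewrite (p_Pend ph) (p_H6 ph).
Qed.

Lemma path_B0 T T1 x r1 c1 P a k b : ctx T T1 x r1 c1 P a -> k <= c1 ->
  get T (P k) k = Some b -> isB0 b -> False.
Proof.
move=> C kc hb bb; case: (pathT C kc) => [hN|[b' [h1 h2]]]; first by rewrite hN in hb.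
by rewrite h1 in hb; case: hb => e; rewrite e bb in h2.
Qed.

Lemma T1_Some T T1 x r1 c1 P a r k e : ctx T T1 x r1 c1 P a ->
  get T r k = Some e -> exists e', get T1 r k = Some e'.
Proof.
move=> C he; have [_ _ _ ph] := C.
case pb: ((k <= c1) && (r == P k)).
  case/andP: pb => kc /eqP er; subst r.
  have [h1 h2] := p_H1 ph (introT andP (conj (leq0n k) kc)); by exists (a k).
by exists e; rewrite (p_H2 ph (leq0n k) (not_path (negbT pb))).
Qed.

Lemma T1_adj T T1 x r1 c1 P a r k e e' : ctx T T1 x r1 c1 P a ->
  get T1 r k = Some e -> get T1 r k.+1 = Some e' -> lel e e'.
Proof.
move=> C he he'; have [[hY [hB0 [hR hC]]] hR0 hC0 ph] := C.
case b': (isB0 e').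
  have hT' := T1_B0 C he' b'.
  have [d hd bd] := hB0 _ _ _ hT' b' r k (leqnn _) (leqnSn _) (leq0n _).
  have ed : get T1 r k = Some d.
    case pb: ((k <= c1) && (r == P k)).
      case/andP: pb => kc /eqP er; subst r; case: (path_B0 C kc hd bd).
    by rewrite (p_H2 ph (leq0n k) (not_path (negbT pb))).
  rewrite ed in he; case: he => <-; exact: hR0 hd hT' bd b'.
case b: (isB0 e); first by apply: ltlW; apply: ltl_B01 => //; rewrite b'.
apply: ltlW.
case pb: ((k <= c1) && (r == P k)); case pb': ((k.+1 <= c1) && (r == P k.+1)).
- case/andP: pb => kc /eqP er; case/andP: pb' => kc' /eqP er'.
  have [h1 _] := p_H1 ph (introT andP (conj (leq0n k) kc)).
  have [h1' _] := p_H1 ph (introT andP (conj (leq0n k.+1) kc')).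
  rewrite er h1 in he; rewrite er' h1' in he'; case: he => <-; case: he' => <-.
  by have [_ ? _] := p_H3 ph (introT andP (conj (leq0n k) kc')).
- case/andP: pb => kc /eqP er.
  have hT' : get T r k.+1 = Some e' by rewrite -(p_H2 ph (leq0n _) (not_path (negbT pb'))).
  case: (ltngtP k c1) kc => // [kc|ek] _.
    have [h1 h2 _] := p_H3 ph (introT andP (conj (leq0n k) kc)).
    have [h1' _] := p_H1 ph (introT andP (conj (leq0n k) (ltnW kc))).
    rewrite er h1' in he; case: he => <-; rewrite -er in h1.
    have nb1 : ~~ isB0 (a k.+1) by case: (p_H1 ph (introT andP (conj (leq0n k.+1) kc))).
    exact: ltl_trans h2 (hR _ _ _ _ (leq0n _) h1 hT' nb1 (negbT b')).
  subst k; have := p_H6 ph; rewrite -(p_Pend ph) -er => hN.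
  by rewrite (get_None_after hN (leqnSn _)) in hT'.
- case/andP: pb' => kc' /eqP er'.
  have hT : get T r k = Some e by rewrite -(p_H2 ph (leq0n _) (not_path (negbT pb))).
  have [_ h2 h3] := p_H3 ph (introT andP (conj (leq0n k) kc')).
  have [h1' _] := p_H1 ph (introT andP (conj (leq0n k.+1) kc')).
  rewrite er' h1' in he'; case: he' => <-.
  have ne : r != P k by move: pb; rewrite (ltnW kc') /= => /negbT.
  have rk : r < P k by rewrite ltn_neqAle ne er' h3.
  apply: lel_ltl_trans h2.
  exact: (p_H4 ph (introT andP (conj (leq0n k) (ltnW kc'))) rk hT).
- have hT : get T r k = Some e by rewrite -(p_H2 ph (leq0n _) (not_path (negbT pb))).
  have hT' : get T r k.+1 = Some e' by rewrite -(p_H2 ph (leq0n _) (not_path (negbT pb'))).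
  exact: hR _ _ _ _ (leq0n _) hT hT' (negbT b) (negbT b').
Qed.

Lemma T1_row T T1 x r1 c1 P a r k k' e e' : ctx T T1 x r1 c1 P a ->
  k <= k' -> get T1 r k = Some e -> get T1 r k' = Some e' -> lel e e'.
Proof.
move=> C; elim: k' e' => [|k' IH] e'.
  rewrite leqn0 => /eqP -> h h'; rewrite h in h'; case: h' => <-; exact: lel_refl.
rewrite leq_eqVlt => /orP[/eqP ->|]; first by move=> h h'; rewrite h in h'; case: h' => <-; exact: lel_refl.
rewrite ltnS => kk he he'.
have [d hd] : exists d, get T1 r k' = Some d.
  case ed: (get T1 r k') => [d|]; first by exists d.
  by rewrite (get_None_after ed (leqnSn _)) in he'.
exact: lel_trans (IH _ kk he hd) (T1_adj C hd he').
Qed.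

Lemma col_step U c v : J U c -> ~~ isB0 v -> has_greater v (col_line U c) ->
  exists w0, [/\ get U (least_pos v (col_line U c)) c = Some w0, ltl v w0, ~~ isB0 w0,
   J (set_box U (least_pos v (col_line U c)) c v) c.+1 &
   TS (set_box U (least_pos v (col_line U c)) c v) c.+1 w0 (least_pos v (col_line U c))].
Proof.
move=> JU nv hg.
have [w0 [hw0 [vw0 _]]] := lp_spec hg; rewrite col_lineE in hw0.
set u := least_pos _ _ in hw0 *.
have nw := ltl_B1 nv vw0.
have gt : forall r k, c < k -> get (set_box U u c v) r k = get U r k by move=> r k; exact: get_sb_gt.
exists w0; split => //.
  apply: J_agree (J_mono JU (leqnSn _)) => r k ck; left; exact: gt.
case: (JU) => [hY [hB0 [hR hC]]].
rewrite /TS gt //; case e: (get U u c.+1) => [b|]; last by left.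
right; exists b; split => //.
case bb: (isB0 b).
  have [b' hb1 hb2] := hB0 _ _ _ e bb u c (leqnn _) (leqnSn _) (leqnn _).
  by rewrite hw0 in hb1; case: hb1 => eb; rewrite -eb in hb2; rewrite hb2 in nw.
exact: hR _ _ _ _ (leqnn _) hw0 e nw (negbT bb).
Qed.

Lemma tail U v t o : ins U v t o -> forall c U' r' c' R, t = Col c -> o = Placed U' r' c' ->
  J U c -> ~~ isB0 v -> TS U c v R -> r' <= R /\ c <= c'.
Proof.
elim=> {U v t o} //.
- move=> U v c0 ng c U' r' c' R [<-] [_ <- <-] JU nv TR; split => //; exact: cb_TS TR ng.
- move=> U v c0 o hg u w IHh IH c U' r' c' R [<-] eo JU nv TR.
  have [w0 [hw0 hv nw J1 TS1]] := col_step JU nv hg.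
  have ew : w = w0 := get_nth _ hw0.
  rewrite ew in IH.
  have dE : dest c0 u w0 = Col c0.+1 by rewrite /dest (negbTE nw).
  have [h1 h2] := IH _ _ _ _ _ dE eo J1 nw TS1.
  split; last exact: ltnW.
  apply: leq_trans h1 _; exact: TS_le.
Qed.

Lemma agree_mono U V c c' : agree U V c -> c <= c' -> agree U V c'.
Proof. move=> ag cc r k ck; apply: ag; exact: leq_trans cc ck. Qed.

Lemma agree_get_B1 U V c r k e : agree U V c -> c <= k -> get V r k = Some e -> ~~ isB0 e ->
  get U r k = Some e.
Proof.
move=> ag ck he ne; case: (ag r k ck) => [->//|[a0 [b0 [h1 [h2 _]]]]].
by rewrite he in h1; case: h1 => e1; rewrite e1 h2 in ne.
Qed.

Lemma J_T1 T T1 x r1 c1 P a : ctx T T1 x r1 c1 P a -> J T1 c1.+1.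
Proof.
case=> JT _ _ ph; apply: J_agree (J_mono JT (leq0n _)) => r k ck; left.
apply: (p_H2 ph (leq0n _)); by rewrite ck.
Qed.

Lemma F_TS T T1 x r1 c1 P a U u w0 : ctx T T1 x r1 c1 P a -> u <= r1 ->
  get T1 u c1 = Some w0 -> ~~ isB0 w0 -> agree U T1 c1.+1 -> TS U c1.+1 w0 u.
Proof.
move=> C ur hw nw ag; have [[hY [hB0 [hR hC]]] _ _ ph] := C.
have e1 : get T1 u c1.+1 = get T u c1.+1 by apply: (p_H2 ph (leq0n _)); rewrite ltnSn.
rewrite /TS; case e: (get U u c1.+1) => [b|]; last by left.
right; exists b; split => //.
have pc1 : P c1 = r1 := p_Pend ph.
case bb: (isB0 b).
  have [b' hb1 hb2] := agree_B0 ag (leqnn _) e bb.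
  rewrite e1 in hb1.
  have [d hd bd] := hB0 _ _ _ hb1 hb2 u c1 (leqnn _) (leqnSn _) (leq0n _).
  case: (eqVneq u (P c1)) => [eu|ne].
    by rewrite eu in hd; case: (path_B0 C (leqnn _) hd bd).
  rewrite -(p_H2 ph (leq0n _) (introT orP (or_intror ne))) hw in hd.
  by case: hd => ed; rewrite ed bd in nw.
have hb1 := agree_B1 ag (leqnn _) e (negbT bb); rewrite e1 in hb1.
case: (eqVneq u (P c1)) => [eu|ne].
  have := p_H6 ph; rewrite -pc1 -eu => hN.
  by rewrite (get_None_after hN (leqnSn _)) in hb1.
have hT := hw; rewrite (p_H2 ph (leq0n _) (introT orP (or_intror ne))) in hT.
exact: hR _ _ _ _ (leq0n _) hT hb1 nw (negbT bb).
Qed.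

Lemma cp2 T T1 x r1 c1 P a U v t o : ctx T T1 x r1 c1 P a -> ins U v t o ->
  forall c U' r' c', t = Col c -> o = Placed U' r' c' -> agree U T1 c -> c <= c1 ->
  ltl v (a c) -> ~~ isB0 v -> c1 < c' /\ r' <= r1.
Proof.
move=> C; have [JT _ _ ph] := C.
elim=> {U v t o} //.
- move=> U v c0 ng c U' r' c' [<-] _ ag cc va nv.
  have [h1 h2] := p_H1 ph (introT andP (conj (leq0n c0) cc)).
  have hU := agree_get_B1 ag (leqnn _) h1 h2.
  by case/negP: ng; apply/has_greaterP; exists (P c0), (a c0); rewrite col_lineE.
- move=> U v c0 o hg u w IHh IH c U' r' c' [<-] eo ag cc va nv.
  have [w0 [hw0 [vw0 [wmin wstr]]]] := lp_spec hg; rewrite col_lineE in hw0.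
  rewrite -/u in hw0.
  have ew : w = w0 := get_nth _ hw0.
  have nw := ltl_B1 nv vw0.
  rewrite ew in IH IHh.
  have dE : dest c0 u w0 = Col c0.+1 by rewrite /dest (negbTE nw).
  rewrite dE in IH IHh.
  have [h1 h2] := p_H1 ph (introT andP (conj (leq0n c0) cc)).
  have hU := agree_get_B1 ag (leqnn _) h1 h2.
  have uP : u <= P c0.
    apply: (lp_le (b := a c0)); first by rewrite col_lineE.
      by [].
    move=> j e Pj he ve; rewrite col_lineE in he.
    have ne := ltl_B1 nv ve.
    have := agree_B1 ag (leqnn _) he ne.
    rewrite (p_H2 ph (leq0n _)) ?(gtn_eqF Pj) ?orbT // => hT.
    apply: ltlW; apply: (p_H5 ph _ Pj hT); by rewrite cc.
  have hT1 := agree_B1 ag (leqnn _) hw0 nw.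
  have wa : lel w0 (a c0).
    case: (eqVneq u (P c0)) => [eu|ne].
      by rewrite eu h1 in hT1; case: hT1 => <-; apply: lel_refl.
    rewrite (p_H2 ph (leq0n _)) ?ne ?orbT // in hT1.
    apply: (p_H4 ph _ _ hT1); first by rewrite cc.
    by rewrite ltn_neqAle ne uP.
  have cs : c0 < size (nth [::] U u) := get_size hw0.
  have ag1 : agree (set_box U u c0 v) T1 c0.+1.
    apply: agree_sb (agree_mono ag (leqnSn _)) (ltnSn _) (ltnW cs).
  have [lt|ec] : c0 < c1 \/ c0 = c1.
    by move: cc; rewrite leq_eqVlt => /orP[/eqP ->|->]; [right|left].
    apply: (IH _ _ _ _ erefl eo ag1 lt _ nw).
    have [_ h3 _] := p_H3 ph (introT andP (conj (leq0n c0) lt)).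
    exact: lel_ltl_trans wa h3.
  subst c0.
  have J1 : J (set_box U u c1 v) c1.+1 := J_agree ag1 (J_T1 C).
  have ur : u <= r1 by rewrite -(p_Pend ph).
  have TS1 := F_TS C ur hT1 nw ag1.
  have [r'u cc'] := tail IHh erefl eo J1 nw TS1.
  split => //; exact: leq_trans r'u ur.
Qed.

Definition agreeR (U V : tableau) r := forall r' k, get U r' k = get V r' k \/
  (r' < r /\ exists a b, get V r' k = Some a /\ isB0 a /\ get U r' k = Some b /\ isB0 b).

Lemma agreeR_agree U V r c : agreeR U V r -> agree U V c.
Proof. move=> h r' k _; case: (h r' k) => [->|[_ hh]]; by [left|right]. Qed.

Definition Qr (T1 : tableau) (P : nat -> nat) c1 r z :=
  r = 0 \/ exists q, (forall e, get T1 r q = Some e -> ltl z e) /\ (forall k, k <= c1 -> P k < r -> q < k).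

Lemma rp T T1 x r1 c1 P a U z t o : ctx T T1 x r1 c1 P a -> ins U z t o ->
  forall r U' r2 c2, t = Row r -> o = Placed U' r2 c2 -> isB0 z -> agreeR U T1 r ->
  Qr T1 P c1 r z -> c1 < c2 /\ r2 <= r1.
Proof.
move=> C; have [JT hR0 hC0 ph] := C; have [hY [hB0 [hR hC]]] := JT.
have pc1 : P c1 = r1 := p_Pend ph.
elim=> {U z t o}.
- move=> U z r0 ng r U' r2 c2 [<-] [_ <- <-] bz agR Q.
  have rowE : forall k, get U r0 k = get T1 r0 k.
    by move=> k; case: (agR r0 k) => [//|[]]; rewrite ltnn.
  have ngE : forall k e, get U r0 k = Some e -> lel e z.
    move=> k e he; rewrite /lel; apply/negP => ze; case/negP: ng.
    by apply/has_greaterP; exists k, e; rewrite row_lineE.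
  case: (ltngtP r0 r1) => [lt|gt|eq].
  + split => //.
    have := p_H6' ph lt; case e: (get T r0 c1) => [d|] // _.
    have hU : get U r0 c1 = Some d.
      by rewrite rowE (p_H2 ph (leq0n _)) // pc1 (ltn_eqF lt) orbT.
    exact: get_size hU.
  + exfalso; case: Q => [e0|[q [Qa Qb]]]; first by rewrite e0 in gt.
    set L := size (nth [::] U r0).
    have Lq : L <= q.
      rewrite leqNgt; apply/negP => qL.
      have hq := get_Some (L1 0) qL; rewrite rowE in hq.
      have := ngE _ _ (etrans (rowE q) hq); rewrite /lel (Qa _ hq); by [].
    have kP : P (minn L c1) < r0.
      case: (leqP c1 L) => cL.
        by rewrite pc1.
      rewrite ltnNge; apply/negP => rP.
      have [h1 _ _] := p_H3 ph (introT andP (conj (leq0n L) cL)).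
      have [b hb] := hY _ _ _ (leq0n _) h1 _ rP.
      have [e' he'] := T1_Some C hb.
      by move: (get_size (etrans (rowE L) he')); rewrite ltnn.
    have := Qb _ (geq_minr _ _) kP.
    rewrite ltnNge; move/negP; apply; exact: leq_trans (geq_minl _ _) Lq.
  + subst r0; exfalso.
    have [h1 h2] := p_H1 ph (introT andP (conj (leq0n c1) (leqnn _))).
    rewrite pc1 -rowE in h1.
    have := ngE _ _ h1; rewrite /lel ltl_B01 //.
- by [].
- move=> U z r0 o hg s w hnc IHh IH r U' r2 c2 [<-] eo bz agR Q.
  have rowE : forall k, get U r0 k = get T1 r0 k.
    by move=> k; case: (agR r0 k) => [//|[]]; rewrite ltnn.
  have [w0 [hw0 [zw0 [wmin wstr]]]] := lp_spec hg; rewrite row_lineE -/s in hw0.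
  have ew : w = w0 := get_nth _ hw0.
  rewrite ew in IH IHh.
  have hT1s : get T1 r0 s = Some w0 by rewrite -rowE.
  have cs : s < size (nth [::] U r0) := get_size hw0.
  have sq : forall q, (forall e, get T1 r0 q = Some e -> ltl z e) -> s <= q.
    move=> q Qa; case eq: (get T1 r0 q) => [e|].
      apply: (lp_le (b := e)); first by rewrite row_lineE rowE.
        exact: Qa.
      move=> j e' qj he' ze'; rewrite row_lineE rowE in he'.
      exact: T1_row C (ltnW qj) eq he'.
    apply: ltnW; apply: lp_le_none => // j qj; rewrite row_lineE rowE.
    exact: get_None_after eq qj.
  case bw: (isB0 w0).
  + have dE : dest s r0 w0 = Row r0.+1 by rewrite /dest bw.
    rewrite dE in IH IHh.
    apply: (IH _ _ _ _ erefl eo bw).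
      move=> r' k; case: (eqVneq r' r0) => [er|ner].
        subst r'; case: (eqVneq k s) => [ek|nek].
          subst k; right; split => //; exists w0, z; split => //; split => //.
          by rewrite get_sb_same.
        rewrite (get_sb_ex z hw0) ?nek ?orbT //.
        case: (agR r0 k) => [->|[h1 h2]]; [by left|by right; split => //; exact: ltnW].
      rewrite (get_sb_ex z hw0) ?ner //.
      case: (agR r' k) => [->|[h1 h2]]; [by left|by right; split => //; exact: ltnW].
    right; exists s; split.
      move=> e he; case be: (isB0 e); last by apply: ltl_B01; rewrite ?be.
      have h1 := T1_B0 C hT1s bw; have h2 := T1_B0 C he be.
      exact: hC0 h1 h2 bw be.
    move=> k kc; rewrite ltnS leq_eqVlt => /orP[/eqP ek|lt].
      rewrite ltnNge; apply/negP => ks.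
      have h1 := T1_B0 C hT1s bw.
      have [b hb bb] := hB0 _ _ _ h1 bw r0 k (leqnn _) ks (leq0n _).
      rewrite -ek in hb; exact: path_B0 C kc hb bb.
    case: Q => [e0|[q [Qa Qb]]]; first by rewrite e0 in lt.
    exact: leq_ltn_trans (sq _ Qa) (Qb _ kc lt).
  + have nw : ~~ isB0 w0 by rewrite bw.
    have dE : dest s r0 w0 = Col s.+1 by rewrite /dest bw.
    rewrite dE in IH IHh.
    have ag1 : agree (set_box U r0 s z) T1 s.+1.
      apply: agree_sb (ltnSn _) (ltnW cs); exact: agreeR_agree agR.
    case: (ltnP c1 s) => cs1.
    * have rr : r0 <= r1.
        rewrite leqNgt; apply/negP => lt.
        case: Q => [e0|[q [Qa Qb]]]; first by rewrite e0 in lt.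
        have lt' : P c1 < r0 by rewrite pc1.
        have := Qb _ (leqnn _) lt' => /(leq_ltn_trans (sq _ Qa)).
        by rewrite ltnNge ltnW.
      have J1 : J (set_box U r0 s z) s.+1 := J_agree ag1 (J_mono (J_T1 C) (leq_trans cs1 (leqnSn _))).
      have TS1 : TS (set_box U r0 s z) s.+1 w0 r0.
        rewrite /TS get_sb_gt // rowE (p_H2 ph (leq0n _)) ?(leq_trans cs1) //.
        have hT : get T r0 s = Some w0 by rewrite -(p_H2 ph (leq0n _)) ?cs1.
        case e: (get T r0 s.+1) => [b|]; last by left.
        right; exists b; split => //.
        case bb: (isB0 b).
          have [b' hb1 hb2] := hB0 _ _ _ e bb r0 s (leqnn _) (leqnSn _) (leq0n _).
          by rewrite hT in hb1; case: hb1 => eb; rewrite -eb bw in hb2.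
        exact: hR _ _ _ _ (leq0n _) hT e nw (negbT bb).
      have [h1 h2] := tail IHh erefl eo J1 nw TS1.
      split; [exact: leq_trans cs1 (ltnW h2) | exact: leq_trans h1 rr].
    * have rP : r0 <= P s.
        rewrite leqNgt; apply/negP => lt.
        case: Q => [e0|[q [Qa Qb]]]; first by rewrite e0 in lt.
        have := Qb _ cs1 lt => /(leq_ltn_trans (sq _ Qa)); by rewrite ltnn.
      have [h1 h2] := p_H1 ph (introT andP (conj (leq0n s) cs1)).
      have wa : lel w0 (a s).
        case: (eqVneq r0 (P s)) => [er|ne].
          by rewrite er h1 in hT1s; case: hT1s => <-; apply: lel_refl.
        have hT := hT1s; rewrite (p_H2 ph (leq0n _)) ?ne ?orbT // in hT.
        apply: (p_H4 ph _ _ hT); first by rewrite cs1.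
        by rewrite ltn_neqAle ne rP.
      have [lt|es] : s < c1 \/ s = c1.
        by move: cs1; rewrite leq_eqVlt => /orP[/eqP ->|->]; [right|left].
        apply: (cp2 C IHh erefl eo ag1 lt _ nw).
        have [_ h3 _] := p_H3 ph (introT andP (conj (leq0n s) lt)).
        exact: lel_ltl_trans wa h3.
      rewrite es in IHh ag1 hT1s.
      have J1 : J (set_box U r0 c1 z) c1.+1 := J_agree ag1 (J_T1 C).
      have rr : r0 <= r1 by rewrite -pc1 -es.
      have TS1 := F_TS C rr hT1s nw ag1.
      have [h3 h4] := tail IHh erefl eo J1 nw TS1.
      split => //; exact: leq_trans h3 rr.
- by [].
- by [].
Qed.
Unset Implicit Arguments.

Theorem mainTheorem3 (m n : nat) (T : tableau) (x y : letter)
  (T1 : tableau) (r1 c1 : nat) (T2 : tableau) (r2 c2 : nat) :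
  0 < m -> 0 < n ->
  spo_tableau m n T ->
  in_B1 n x -> in_B0 m y ->
  col_insert x T (NewBox T1 r1 c1) ->
  row_insert T1 y (NewBox T2 r2 c2) ->
  c1 < c2 /\ r2 <= r1.
Proof.
move=> _ _ spo hx hy Hc Hr.
have Hc' : ins T x (Col 0) (Placed T1 r1 c1) by inversion Hc.
have Hr' : ins T1 y (Row 0) (Placed T2 r2 c2) by inversion Hr.
have JT := J_spo spo.
have nx : ~~ isB0 x by move: hx; case: (x).
have by0 : isB0 y by move: hy; case: (y).
have PreT : Pre T 0 x by exists (size T); split => //; left; rewrite get_out.
have [P [a ph]] := ph1_ins Hc' erefl erefl JT nx PreT.
have C : ctx T T1 x r1 c1 P a.
  case: spo => [_ [_ [_ [_ [hR0 [hC0 _]]]]]]; by split.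
apply: (rp C Hr' erefl erefl by0); first by move=> r' k; left.
by left.
Qed.
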